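(* Let $k$ be an algebraically closed field of characteristic $0$ and let $X$ be an affine $k$-variety. Then $\mathcal{O}_{ch}(X)\subseteq ML(X)$. In particular, if $ML(X)=k$ then $\mathcal{O}_{ch}(X)=k$.
   Context: For a $k$-morphism $g:\mathbb{A}^1_k\to X$, $\mathcal{O}_{ch,g}(X)=\{f\in\mathcal{O}(X): f\circ g\text{ is constant}\}$, and $\mathcal{O}_{ch}(X)=\bigcap_{g}\mathcal{O}_{ch,g}(X)$ over all $k$-morphisms $g:\mathbb{A}^1_k\to X$. A locally nilpotent $k$-derivation of $\mathcal{O}(X)$ is a $k$-linear derivation $D$ such that every element is killed by some power of $D$; $LND_k(\mathcal{O}(X))$ denotes the set of these. The Makar-Limanov invariant is $ML(X)=\bigcap_{D\in LND_k(\mathcal{O}(X))}\ker D$. *)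

(* Defs.v *)
From HB Require Import structures.
From mathcomp Require Import all_boot all_order all_algebra.
Set Implicit Arguments. Unset Strict Implicit. Unset Printing Implicit Defensive.
Import GRing.Theory.
Local Open Scope ring_scope.

(* An affine k-variety X is encoded by its coordinate ring O(X) = A:
   a commutative k-algebra that is finitely generated and an integral domain. *)

(* A is generated as a k-algebra by the finite sequence s:
   every predicate containing k, s and closed under + and * holds everywhere. *)
Definition fin_gen (k : fieldType) (A : comAlgType k) : Prop :=
  exists s : seq A, forall P : A -> Prop,
    (forall c : k, P (c%:A)) -> (forall x, x \in s -> P x) ->
    (forall x y, P x -> P y -> P (x + y)) ->
    (forall x y, P x -> P y -> P (x * y)) -> forall a, P a.

Definition is_domain (k : fieldType) (A : comAlgType k) : Prop :=
  (1 : A) != 0 /\ forall a b : A, a * b = 0 -> a = 0 \/ b = 0.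

Definition affine_coord_ring (k : fieldType) (A : comAlgType k) : Prop :=
  fin_gen A /\ is_domain A.

(* k-morphisms g : A^1_k -> X  <->  k-algebra morphisms g^* : O(X) -> k[t];
   f o g = g^*(f), constant iff it is a constant polynomial. *)
Definition Och_g (k : fieldType) (A : comAlgType k)
  (g : {lrmorphism A -> {poly k}}) (f : A) : Prop := (size (g f) <= 1)%N.

Definition Och (k : fieldType) (A : comAlgType k) (f : A) : Prop :=
  forall g : {lrmorphism A -> {poly k}}, Och_g g f.

Definition is_derivation (k : fieldType) (A : comAlgType k) (D : {linear A -> A}) :=
  forall a b : A, D (a * b) = a * D b + D a * b.

Definition is_LND (k : fieldType) (A : comAlgType k) (D : {linear A -> A}) :=
  is_derivation D /\ forall a : A, exists m : nat, iter m D a = 0.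

Definition ML (k : fieldType) (A : comAlgType k) (f : A) : Prop :=
  forall D : {linear A -> A}, is_LND D -> D f = 0.

Definition in_k (k : fieldType) (A : comAlgType k) (f : A) : Prop :=
  exists c : k, f = c%:A.

(* Main.v *)
Require Import Defs.
From HB Require Import structures.
From mathcomp Require Import all_boot all_order all_algebra.
Import GRing.Theory.
Local Open Scope ring_scope.
From Stdlib Require Import ClassicalEpsilon Classical.
From mathcomp Require Import zify ring.
Set Implicit Arguments. Unset Strict Implicit. Unset Printing Implicit Defensive.
Lemma pred_det (R : comPzRingType) (P : R -> Prop) (P0 : P 0) (P1 : P 1) (PN1 : P (-1))
  (PD : forall a b, P a -> P b -> P (a + b)) (PM : forall a b, P a -> P b -> P (a * b))
  n (M : 'M[R]_n) : (forall i j, P (M i j)) -> P (\det M).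
Proof.
move=> HM; rewrite /determinant; apply: big_ind => // s _.
apply: (PM); first by case: (perm.odd_perm s); rewrite ?expr0 ?expr1.
by apply: big_ind => // i _; apply: HM.
Qed.

Section Basic.
Variable k : fieldType.
Variable A : comAlgType k.

Record subr (S : A -> Prop) : Prop := Subr {
  subr_k : forall c : k, S c%:A;
  subr_D : forall a b, S a -> S b -> S (a + b);
  subr_M : forall a b, S a -> S b -> S (a * b) }.

Record homS (S : A -> Prop) (phi : A -> k) : Prop := HomS {
  homS_k : forall c, phi c%:A = c;
  homS_D : forall a b, S a -> S b -> phi (a + b) = phi a + phi b;
  homS_M : forall a b, S a -> S b -> phi (a * b) = phi a * phi b }.

Variable S : A -> Prop.
Hypothesis hS : subr S.

Lemma S0 : S 0. Proof. by have := subr_k hS 0; rewrite scale0r. Qed.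
Lemma S1 : S 1. Proof. by have := subr_k hS 1; rewrite scale1r. Qed.
Lemma SN1 : S (-1). Proof. by have := subr_k hS (-1); rewrite scaleN1r. Qed.
Lemma SN a : S a -> S (- a).
Proof. by move=> Sa; rewrite -mulN1r; apply: (subr_M hS) => //; exact: SN1. Qed.
Lemma SB a b : S a -> S b -> S (a - b).
Proof. by move=> Sa Sb; apply: (subr_D hS) => //; apply: SN. Qed.
Lemma SX a n : S a -> S (a ^+ n).
Proof. move=> Sa; elim: n => [|n IH]; first by rewrite expr0; exact: S1.
by rewrite exprS; apply: (subr_M hS). Qed.
Lemma Snat n : S n%:R.
Proof. by have := subr_k hS n%:R; rewrite scaler_nat. Qed.
Lemma Ssum (I : Type) (r : seq I) (P : pred I) (F : I -> A) :
  (forall i, P i -> S (F i)) -> S (\sum_(i <- r | P i) F i).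
Proof. move=> H; apply: big_ind => //; [exact: S0| exact: (subr_D hS)]. Qed.
Lemma Sprod (I : Type) (r : seq I) (P : pred I) (F : I -> A) :
  (forall i, P i -> S (F i)) -> S (\prod_(i <- r | P i) F i).
Proof. move=> H; apply: big_ind => //; [exact: S1| exact: (subr_M hS)]. Qed.

Variable phi : A -> k.
Hypothesis hphi : homS S phi.

Lemma hom0 : phi 0 = 0. Proof. by rewrite -(scale0r (1 : A)) (homS_k hphi). Qed.
Lemma hom1 : phi 1 = 1. Proof. by rewrite -(scale1r (1 : A)) (homS_k hphi). Qed.
Lemma homN1 : phi (-1) = -1. Proof. by rewrite -scaleN1r (homS_k hphi). Qed.
Lemma homN a : S a -> phi (- a) = - phi a.
Proof. move=> Sa; rewrite -mulN1r (homS_M hphi) //; last exact: SN1.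
by rewrite homN1 mulN1r. Qed.
Lemma homB a b : S a -> S b -> phi (a - b) = phi a - phi b.
Proof. by move=> Sa Sb; rewrite (homS_D hphi) ?homN //; exact: SN. Qed.
Lemma homX a n : S a -> phi (a ^+ n) = phi a ^+ n.
Proof. move=> Sa; elim: n => [|n IH]; first by rewrite !expr0 hom1.
by rewrite !exprS (homS_M hphi) ?IH //; exact: SX. Qed.
Lemma homnat n : phi n%:R = n%:R.
Proof. by rewrite -scaler_nat (homS_k hphi). Qed.
Lemma homZ c a : S a -> phi (c *: a) = c * phi a.
Proof. by move=> Sa; rewrite -mulr_algl (homS_M hphi) ?(homS_k hphi) //; exact: (subr_k hS). Qed.
Lemma homsum (I : Type) (r : seq I) (P : pred I) (F : I -> A) :
  (forall i, P i -> S (F i)) -> phi (\sum_(i <- r | P i) F i) = \sum_(i <- r | P i) phi (F i).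
Proof.
move=> H; elim: r => [|a r IH]; first by rewrite !big_nil hom0.
rewrite !big_cons; case Pa: (P a); last exact: IH.
rewrite (homS_D hphi) ?IH //; [exact: H| exact: Ssum].
Qed.

Lemma homprod (I : Type) (r : seq I) (P : pred I) (F : I -> A) :
  (forall i, P i -> S (F i)) -> phi (\prod_(i <- r | P i) F i) = \prod_(i <- r | P i) phi (F i).
Proof.
move=> H; elim: r => [|a r IH]; first by rewrite !big_nil hom1.
rewrite !big_cons; case Pa: (P a); last exact: IH.
rewrite (homS_M hphi) ?IH //; [exact: H| exact: Sprod].
Qed.

Lemma hom_det n (M : 'M[A]_n) : (forall i j, S (M i j)) ->
  phi (\det M) = \det (\matrix_(i, j) phi (M i j)).
Proof.
move=> HM; rewrite /determinant homsum; last first.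
  by move=> s _; apply: (subr_M hS); [apply: SX; exact: SN1 | exact: Sprod].
apply: eq_bigr => s _; rewrite (homS_M hphi); last exact: Sprod.
  rewrite homX ?homN1; last exact: SN1.
  by rewrite homprod //; congr (_ * _); apply: eq_bigr => i _; rewrite mxE.
by apply: SX; exact: SN1.
Qed.

Definition polyS (p : {poly A}) := forall i, S p`_i.

Lemma polyS_C a : S a -> polyS a%:P.
Proof. by move=> Sa i; rewrite coefC; case: (i == 0)%N => //; exact: S0. Qed.
Lemma polyS_0 : polyS 0. Proof. by move=> i; rewrite coef0; exact: S0. Qed.
Lemma polyS_1 : polyS 1. Proof. by move=> i; rewrite coef1; exact: Snat. Qed.
Lemma polyS_X : polyS 'X. Proof. by move=> i; rewrite coefX; exact: Snat. Qed.
Lemma polyS_Xn n : polyS 'X^n. Proof. by move=> i; rewrite coefXn; exact: Snat. Qed.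
Lemma polyS_D p q : polyS p -> polyS q -> polyS (p + q).
Proof. by move=> Hp Hq i; rewrite coefD; apply: (subr_D hS). Qed.
Lemma polyS_N p : polyS p -> polyS (- p).
Proof. by move=> Hp i; rewrite coefN; apply: SN. Qed.
Lemma polyS_B p q : polyS p -> polyS q -> polyS (p - q).
Proof. by move=> Hp Hq; apply: polyS_D => //; apply: polyS_N. Qed.
Lemma polyS_M p q : polyS p -> polyS q -> polyS (p * q).
Proof. by move=> Hp Hq i; rewrite coefM; apply: Ssum => j _; apply: (subr_M hS). Qed.
Lemma polyS_N1 : polyS (-1). Proof. exact: polyS_N polyS_1. Qed.

Lemma coef_mapS p i : (map_poly phi p)`_i = phi p`_i.
Proof. by rewrite coef_map_id0 // hom0. Qed.
Lemma mapS_D p q : polyS p -> polyS q -> map_poly phi (p + q) = map_poly phi p + map_poly phi q.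
Proof. by move=> Hp Hq; apply/polyP => i; rewrite coefD !coef_mapS coefD (homS_D hphi). Qed.
Lemma mapS_N p : polyS p -> map_poly phi (- p) = - map_poly phi p.
Proof. by move=> Hp; apply/polyP => i; rewrite coefN !coef_mapS coefN homN. Qed.
Lemma mapS_B p q : polyS p -> polyS q -> map_poly phi (p - q) = map_poly phi p - map_poly phi q.
Proof. by move=> Hp Hq; rewrite mapS_D ?mapS_N //; apply: polyS_N. Qed.
Lemma mapS_M p q : polyS p -> polyS q -> map_poly phi (p * q) = map_poly phi p * map_poly phi q.
Proof.
move=> Hp Hq; apply/polyP => i; rewrite coef_mapS !coefM homsum; last first.
  by move=> j _; apply: (subr_M hS).
by apply: eq_bigr => j _; rewrite (homS_M hphi) // !coef_mapS.
Qed.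
Lemma mapS_C a : map_poly phi a%:P = (phi a)%:P.
Proof. by apply/polyP => i; rewrite coef_mapS !coefC; case: (i == 0)%N; rewrite ?hom0. Qed.
Lemma mapS_1 : map_poly phi 1 = 1.
Proof. by rewrite mapS_C hom1. Qed.
Lemma mapS_Xn n : map_poly phi 'X^n = 'X^n.
Proof. by apply/polyP => i; rewrite coef_mapS !coefXn homnat. Qed.
End Basic.

Lemma ex_min_prop (P : nat -> Prop) : (exists n, P n) -> exists n, P n /\ forall m, P m -> (n <= m)%N.
Proof.
move=> ex.
pose b := fun n => if excluded_middle_informative (P n) then true else false.
have exb : exists n, b n by case: ex => n Pn; exists n; rewrite /b; case: excluded_middle_informative.
case: (ex_minnP exb) => n bn Hmin; exists n; split.
  by move: bn; rewrite /b; case: excluded_middle_informative.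
by move=> m Pm; apply: Hmin; rewrite /b; case: excluded_middle_informative.
Qed.

Section Null.
Variable k : closedFieldType.
Variable A : comAlgType k.

Definition adj (S : A -> Prop) (x : A) (e : A) := exists p, polyS S p /\ e = p.[x].

Lemma adj_S S x s : subr S -> S s -> adj S x s.
Proof. by move=> hS Ss; exists s%:P; split; [exact: polyS_C | rewrite hornerC]. Qed.
Lemma adj_x S x : subr S -> adj S x x.
Proof. by move=> hS; exists 'X; split; [exact: polyS_X | rewrite hornerX]. Qed.
Lemma subr_adj S x : subr S -> subr (adj S x).
Proof.
move=> hS; split.
- by move=> c; apply: adj_S => //; exact: subr_k.
- move=> a b [p [pS ->]] [q [qS ->]]; exists (p + q); split; first exact: polyS_D.
  by rewrite hornerD.
- move=> a b [p [pS ->]] [q [qS ->]]; exists (p * q); split; first exact: polyS_M.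
  by rewrite hornerM.
Qed.
Lemma polyS_mono (S T : A -> Prop) p : (forall a, S a -> T a) -> polyS S p -> polyS T p.
Proof. by move=> ST pS i; apply: ST. Qed.
Lemma horner_in (T : A -> Prop) p y : subr T -> polyS T p -> T y -> T p.[y].
Proof.
move=> hT pT Ty; rewrite horner_coef; apply: Ssum => // i _.
by apply: (subr_M hT) => //; apply: SX.
Qed.

Section Red.
Variables (S : A -> Prop) (x : A) (g : {poly A}).
Hypotheses (hS : subr S) (gS : polyS S g) (gx : g.[x] = 0).

Lemma red N r : polyS S r -> (size r <= N + (size g).-1)%N ->
  exists r', [/\ polyS S r', (size r' <= (size g).-1)%N,
     lead_coef g ^+ N * r.[x] = r'.[x] &
     forall phi, homS S phi -> (forall i, phi r`_i = 0) -> forall i, phi r'`_i = 0].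
Proof.
set d := (size g).-1; set c := lead_coef g.
have cS : S c by rewrite /c /lead_coef; apply: gS.
elim: N r => [|N IH] r rS hr.
  by exists r; split => //; rewrite expr0 mul1r.
case: (ltnP (N + d) (size r)) => hsz.
  set n := (N + d)%N.
  have szr : size r = n.+1 by apply/eqP; rewrite eqn_leq hsz -addSn hr.
  pose r1 := c *: r - r`_n *: ('X^N * g).
  have r1S : polyS S r1.
    apply: polyS_B => //; move=> i; rewrite coefZ; apply: (subr_M hS) => //.
    by apply: polyS_M => //; exact: polyS_Xn.
  have szr1 : (size r1 <= N + d)%N.
    apply/leq_sizeP => j hj; rewrite /r1 coefB !coefZ coefXnM.
    have -> : (j < N)%N = false by apply/negbTE; rewrite -leqNgt (leq_trans (leq_addr d N)).
    case: (ltngtP j n) => hjn.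
    - by move: hj; rewrite leqNgt -/n hjn.
    - have -> : r`_j = 0 by apply/(leq_sizeP _ _ (eq_leq szr))/hjn.
      have -> : g`_(j - N) = 0.
        apply/(leq_sizeP _ (d.+1)); first by rewrite /d; case: (size g).
        by rewrite ltn_subRL.
      by rewrite mulr0 mulr0 subr0.
    - rewrite hjn /n addKn -/d /c /lead_coef -/d.
      by rewrite mulrC subrr.
  have ev : r1.[x] = c * r.[x].
    by rewrite /r1 hornerD hornerN !hornerZ hornerM gx mulr0 mulr0 subr0.
  case: (IH r1 r1S szr1) => r' [r'S szr' ev' kill'].
  exists r'; split => //.
    by rewrite -ev' ev exprSr mulrA.
  move=> phi hphi kr; apply: kill' => // i.
  rewrite /r1 coefB !coefZ (homB hS hphi); last 2 first.
  - by apply: (subr_M hS).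
  - by apply: (subr_M hS) => //; apply: polyS_M => //; exact: polyS_Xn.
  by rewrite !(homS_M hphi) ?kr ?mul0r ?mulr0 ?subr0 //; apply: polyS_M => //; exact: polyS_Xn.
case: (IH r rS hsz) => r' [r'S szr' ev' kill'].
exists (c *: r'); split.
- by move=> i; rewrite coefZ; apply: (subr_M hS).
- exact: leq_trans (size_scale_leq _ _) szr'.
- by rewrite hornerZ -ev' exprS mulrA.
- move=> phi hphi kr i; rewrite coefZ (homS_M hphi) //.
  by rewrite (kill' phi hphi kr) mulr0.
Qed.
End Red.

Section Ext.
Variables (S : A -> Prop) (x : A) (phi : A -> k) (a : k).
Hypotheses (hS : subr S) (hphi : homS S phi).
Hypothesis Ja : forall p, polyS S p -> p.[x] = 0 -> (map_poly phi p).[a] = 0.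

Definition psi_of (e : A) : k :=
  (map_poly phi (epsilon (inhabits 0) (fun p => polyS S p /\ e = p.[x]))).[a].

Lemma psi_eval p : polyS S p -> psi_of p.[x] = (map_poly phi p).[a].
Proof.
move=> pS; rewrite /psi_of.
set q := epsilon _ _.
have [qS qe] : polyS S q /\ p.[x] = q.[x].
  by apply: (epsilon_spec (inhabits 0) (fun q => polyS S q /\ p.[x] = q.[x])); exists p.
have pqS : polyS S (p - q) by apply: (polyS_D hS) => //; exact: (polyS_N hS).
have H : (map_poly phi (p - q)).[a] = 0 by apply: Ja => //; rewrite hornerD hornerN qe subrr.
rewrite (mapS_B hS hphi) // hornerD hornerN in H.
by apply/esym/subr0_eq.
Qed.

Lemma psi_ext s : S s -> psi_of s = phi s.
Proof. by move=> Ss; rewrite -[s](hornerC s x) psi_eval ?(mapS_C hphi) ?hornerC //; apply: polyS_C. Qed.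

Lemma psi_hom : homS (adj S x) psi_of.
Proof.
split.
- by move=> c; rewrite psi_ext ?(homS_k hphi) //; exact: subr_k.
- move=> _ _ [p [pS ->]] [q [qS ->]].
  by rewrite -hornerD !psi_eval ?(mapS_D hphi) ?hornerD //; exact: polyS_D.
- move=> _ _ [p [pS ->]] [q [qS ->]].
  by rewrite -hornerM !psi_eval ?(mapS_M hS hphi) ?hornerM //; exact: polyS_M.
Qed.
End Ext.

Section IntStep.
Variables (S : A -> Prop) (x : A) (phi : A -> k) (g : {poly A}).
Hypotheses (hS : subr S) (hphi : homS S phi) (gS : polyS S g) (gx : g.[x] = 0)
  (gc : phi (lead_coef g) != 0).

Definition Jset (h : {poly k}) := exists p, [/\ polyS S p, p.[x] = 0 & h = map_poly phi p].

Lemma J_add h1 h2 : Jset h1 -> Jset h2 -> Jset (h1 + h2).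
Proof.
move=> [p [pS px ->]] [q [qS qx ->]]; exists (p + q); split.
- exact: (polyS_D hS).
- by rewrite hornerD px qx addr0.
- by rewrite (mapS_D hphi).
Qed.

Definition liftk (r : {poly k}) : {poly A} := map_poly (fun c : k => c%:A) r.
Lemma liftkS r : polyS S (liftk r).
Proof. by move=> i; rewrite /liftk coef_map_id0 ?scale0r //; exact: (subr_k hS). Qed.
Lemma map_liftk r : map_poly phi (liftk r) = r.
Proof. by apply/polyP => i; rewrite (coef_mapS hphi) /liftk coef_map_id0 ?scale0r // (homS_k hphi). Qed.

Lemma J_mul r h : Jset h -> Jset (r * h).
Proof.
move=> [p [pS px ->]]; exists (liftk r * p); split.
- by apply: (polyS_M hS) => //; exact: liftkS.
- by rewrite hornerM px mulr0.
- by rewrite (mapS_M hS hphi) ?map_liftk //; exact: liftkS.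
Qed.

Lemma size_g : (1 < size g)%N.
Proof.
rewrite ltnNge; apply/negP => hg.
have gC := size1_polyC hg.
have lc : lead_coef g = g`_0 by rewrite /lead_coef; move: hg; case: (size g) => [|[]].
move: gx; rewrite gC hornerC => g0.
by move: gc; rewrite lc g0 (hom0 hphi) eqxx.
Qed.

Lemma no1 : ~ Jset 1.
Proof.
move=> [p [pS px p1]].
set d := (size g).-1; set c := lead_coef g.
have cS : S c by apply: gS.
have d_gt0 : (0 < d)%N by have := size_g; rewrite /d; lia.
pose q := p - 1.
have qS : polyS S q by apply: (polyS_B hS) => //; exact: (polyS_1 hS).
have qx : q.[x] = -1 by rewrite /q hornerD hornerN hornerE px sub0r.
have qk : forall i, phi q`_i = 0.
  move=> i; rewrite /q coefB (homB hS hphi) //; last exact: (polyS_1 hS).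
  by rewrite -(coef_mapS hphi) -p1 coef1 coef1 (homnat hphi) subrr.
set N := (size q + d)%N.
have hr : forall i : 'I_d, exists r', [/\ polyS S r', (size r' <= d)%N,
    c ^+ N * (q * 'X^i).[x] = r'.[x] &
    forall phi0, homS S phi0 -> (forall j, phi0 (q * 'X^i)`_j = 0) -> forall j, phi0 r'`_j = 0].
  move=> i; apply: (red hS gS gx).
  - by apply: (polyS_M hS) => //; exact: (polyS_Xn hS).
  - apply: leq_trans (size_polyMleq _ _) _; rewrite size_polyXn /N.
    have := ltn_ord i; lia.
pose rr i := proj1_sig (constructive_indefinite_description _ (hr i)).
have rrP i := proj2_sig (constructive_indefinite_description _ (hr i)).
pose B := \matrix_(i < d, j < d) (c ^+ N * (i == j)%:R + (rr i)`_j).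
pose col := \col_(j < d) x ^+ j.
have BS : forall i j, S (B i j).
  move=> i j; rewrite mxE; apply: (subr_D hS).
    by apply: (subr_M hS); [exact: SX | exact: Snat].
  by case: (rrP i) => rS _ _ _; exact: rS.
have Bcol : B *m col = 0.
  apply/matrixP => i z; rewrite !mxE.
  under eq_bigr => j _ do rewrite !mxE mulrDl.
  rewrite big_split /=.
  case: (rrP i) => rS szr ev _.
  rewrite -(horner_coef_wide x szr) -ev hornerM qx hornerXn.
  rewrite (bigD1 i) //= eqxx mulr1 big1 ?addr0; last first.
    by move=> j /negbTE; rewrite eq_sym => ->; rewrite mulr0 mul0r.
  by rewrite mulN1r mulrN subrr.
have detB : \det B = 0.
  have := congr1 (mulmx (\adj B)) Bcol.
  rewrite mulmxA mul_adj_mx mulmx0 mul_scalar_mx => /matrixP /(_ (Ordinal d_gt0) 0).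
  by rewrite !mxE expr0 mulr1.
have := hom_det hS hphi BS; rewrite detB (hom0 hphi).
have -> : \matrix_(i, j) phi (B i j) = (phi c ^+ N)%:M.
  apply/matrixP => i j; rewrite !mxE.
  case: (rrP i) => rS _ _ kill.
  have kill' : forall j, phi (q * 'X^i)`_j = 0.
    by move=> j'; rewrite coefMXn; case: ifP => _; [exact: (hom0 hphi) | exact: qk].
  rewrite (homS_D hphi); first last.
  - exact: rS.
  - by apply: (subr_M hS); [exact: SX | exact: Snat].
  rewrite (homS_M hphi); first last.
  - exact: Snat.
  - exact: SX.
  by rewrite (homX hS hphi) // (homnat hphi) (kill phi hphi kill') addr0 mulr_natr.
rewrite det_scalar => /esym/eqP.
by rewrite -exprM expf_eq0 (negbTE gc) andbF.
Qed.

Lemma int_step : exists a, forall p, polyS S p -> p.[x] = 0 -> (map_poly phi p).[a] = 0.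
Proof.
have Jg : Jset (map_poly phi g) by exists g.
have g0 : map_poly phi g != 0.
  apply/eqP => H; move: (congr1 (fun h : {poly k} => h`_(size g).-1) H).
  by rewrite /= (coef_mapS hphi) coef0; move/eqP: gc.
have [n [[h [Jh hn0 hsz]] hmin]] := ex_min_prop
   (ex_intro (fun n => exists h, [/\ Jset h, h != 0 & size h = n]) _
     (ex_intro _ _ (And3 Jg g0 erefl))).
have hmin' : forall h', Jset h' -> h' != 0 -> (size h <= size h')%N.
  by move=> h' J' n'; rewrite hsz; apply: hmin; exists h'.
have sz1 : size h != 1%N.
  apply/eqP => s1; apply: no1.
  have hC := size1_polyC (eq_leq s1).
  have h00 : h`_0 != 0 by apply: contra hn0 => /eqP h0; rewrite hC h0.
  have -> : (1 : {poly k}) = (h`_0)^-1%:P * h by rewrite {2}hC -polyCM mulVf.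
  exact: J_mul.
case/closed_rootP: sz1 => a ha; exists a => p pS px.
have Jp : Jset (map_poly phi p) by exists p.
set h' := map_poly phi p.
have Jm : Jset (h' %% h).
  have -> : h' %% h = h' + (- (h' %/ h)) * h.
    by rewrite {2}(divp_eq h' h) mulNr addrC addKr.
  by apply: J_add => //; exact: J_mul.
have m0 : h' %% h = 0.
  apply/eqP; apply/negP => /negP nz.
  by have := hmin' _ Jm nz; rewrite leqNgt ltn_modp hn0.
move/rootP: ha => ha.
by rewrite (divp_eq h' h) m0 addr0 hornerM ha mulr0.
Qed.
End IntStep.

Section WStep.
Variables (S : A -> Prop) (x : A) (g pv : {poly A}).
Hypotheses (Adom : is_domain A) (hS : subr S) (gS : polyS S g) (gx : g.[x] = 0)
  (g1 : (1 < size g)%N) (pvS : polyS S pv) (v0 : pv.[x] != 0).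

Lemma dom_mul (a b : A) : a != 0 -> b != 0 -> a * b != 0.
Proof.
move=> a0 b0; apply/eqP => /(proj2 Adom) [] /eqP.
  by rewrite (negbTE a0).
by rewrite (negbTE b0).
Qed.
Lemma dom_exp (a : A) n : a != 0 -> a ^+ n != 0.
Proof.
move=> a0; elim: n => [|n IH]; first by rewrite expr0; exact: (proj1 Adom).
by rewrite exprS; apply: dom_mul.
Qed.

Lemma wstep : exists w H, [/\ S w, w != 0, adj S x H & w = pv.[x] * H].
Proof.
set d := (size g).-1; set c := lead_coef g; set v := pv.[x].
have cS : S c by apply: gS.
have c0 : c != 0 by rewrite /c lead_coef_eq0 -size_poly_eq0; lia.
have d_gt0 : (0 < d)%N by rewrite /d; lia.
set N := (size pv + d)%N.
have hr : forall i : 'I_d, exists r', [/\ polyS S r', (size r' <= d)%N,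
    c ^+ N * (pv * 'X^i).[x] = r'.[x] &
    forall phi0, homS S phi0 -> (forall j, phi0 (pv * 'X^i)`_j = 0) -> forall j, phi0 r'`_j = 0].
  move=> i; apply: (red hS gS gx).
  - by apply: (polyS_M hS) => //; exact: (polyS_Xn hS).
  - apply: leq_trans (size_polyMleq _ _) _; rewrite size_polyXn /N.
    rewrite -/d; move: (ltn_ord i); move: (size pv) (nat_of_ord i) => a b; clear; lia.
pose rr i := proj1_sig (constructive_indefinite_description _ (hr i)).
have rrP i := proj2_sig (constructive_indefinite_description _ (hr i)).
pose R := \matrix_(i < d, j < d) (rr i)`_j.
set y := c ^+ N * v.
pose col := \col_(j < d) x ^+ j.
have Mcol : (y%:M - R) *m col = 0.
  apply/matrixP => i z; rewrite !mxE.
  under eq_bigr => j _ do rewrite !mxE mulrBl.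
  rewrite sumrB.
  case: (rrP i) => rS szr ev _.
  rewrite -(horner_coef_wide x szr) -ev hornerM hornerXn.
  rewrite (bigD1 i) //= eqxx mulr1n big1 ?addr0; last first.
    by move=> j /negbTE; rewrite eq_sym => ->; rewrite mulr0n mul0r.
  by rewrite /y mulrA subrr.
have detM : \det (y%:M - R) = 0.
  have := congr1 (mulmx (\adj (y%:M - R))) Mcol.
  rewrite mulmxA mul_adj_mx mulmx0 mul_scalar_mx => /matrixP /(_ (Ordinal d_gt0) 0).
  by rewrite !mxE expr0 mulr1.
set chi := char_poly R.
have chiy : chi.[y] = 0.
  rewrite -detM /chi /char_poly.
  transitivity (horner_eval y (\det (char_poly_mx R))); first by [].
  rewrite -det_map_mx; congr (\det _); apply/matrixP => i j.
  rewrite !mxE; change ((('X *+ (i == j) - ((rr i)`_j)%:P).[y]) = y *+ (i == j) - (rr i)`_j).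
  by rewrite hornerD hornerN hornerMn hornerX hornerC.
have chiS : polyS S chi.
  apply: (pred_det (P := polyS S)).
  - exact: (polyS_0 hS).
  - exact: (polyS_1 hS).
  - exact: (polyS_N1 hS).
  - exact: (polyS_D hS).
  - exact: (polyS_M hS).
  move=> i j; rewrite !mxE; apply: (polyS_B hS).
    by case: (i == j); [rewrite mulr1n; exact: (polyS_X hS) | rewrite mulr0n; exact: (polyS_0 hS)].
  by apply: (polyS_C hS); case: (rrP i) => rS _ _ _; exact: rS.
have chid : chi`_d = 1.
  by have := char_poly_monic R; rewrite monicE /lead_coef size_char_poly /= => /eqP.
have chid0 : chi`_d != 0 by rewrite chid; exact: (proj1 Adom).
have [m [chim mmin]] := ex_min_prop (ex_intro (fun m => chi`_m != 0) d chid0).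
have take0 : take_poly m chi = 0.
  apply/polyP => i; rewrite coef_take_poly coef0; case: ifP => // im.
  by case: (eqVneq chi`_i 0) => // nz; have := mmin _ nz; rewrite leqNgt im.
set chi1 := drop_poly m chi.
have chiE : chi = chi1 * 'X^m by rewrite -{1}(poly_take_drop m chi) take0 add0r.
have y0 : y != 0 by apply: dom_mul => //; apply: dom_exp.
have chi1y : chi1.[y] = 0.
  move: chiy; rewrite chiE hornerM hornerXn => /(proj2 Adom) [] // /eqP.
  by rewrite (negbTE (dom_exp m y0)).
set chi2 := drop_poly 1 chi1.
have chi1E : chi1 = (chi`_m)%:P + chi2 * 'X.
  rewrite -{1}(poly_take_drop 1 chi1) expr1; congr (_ + _).
  apply/polyP => i; rewrite coef_take_poly coefC /chi1 coef_drop_poly.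
  by case: i.
have wE : chi`_m = - (chi2.[y] * y).
  move: chi1y; rewrite chi1E hornerD hornerC hornerM hornerX => /eqP.
  by rewrite addr_eq0 => /eqP.
have hT := @subr_adj S x hS.
exists chi`_m, (- (chi2.[y] * c ^+ N)); split.
- exact: chiS.
- exact: chim.
- apply: (SN hT); apply: (subr_M hT).
  + apply: horner_in => //.
      by move=> i; rewrite coef_drop_poly /chi1 coef_drop_poly; apply: adj_S.
    apply: (subr_M hT); first by apply: (SX hT); exact: adj_S.
    by exists pv.
  + by apply: (SX hT); exact: adj_S.
- by rewrite wE /y mulrN mulrA mulrC.
Qed.
End WStep.

Section OneStep.
Hypothesis Adom : is_domain A.

Lemma one_step S x v : subr S -> adj S x v -> v != 0 ->
  exists u, [/\ S u, u != 0 & forall phi, homS S phi -> phi u != 0 ->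
     exists psi, homS (adj S x) psi /\ psi v != 0].
Proof.
move=> hS [pv [pvS ->]] v0.
case: (classic (exists g, [/\ polyS S g, g != 0 & g.[x] = 0])) => [[g [gS g0 gx]] | nog].
- have g1 : (1 < size g)%N.
    rewrite ltnNge; apply/negP => hg.
    have gC := size1_polyC hg.
    move: gx; rewrite gC hornerC => g00.
    by move: g0; rewrite gC g00 polyC0 eqxx.
  have [w [H [wS w0 HT wE]]] := wstep Adom hS gS gx g1 pvS v0.
  have cS : S (lead_coef g) by apply: gS.
  have c0 : lead_coef g != 0 by rewrite lead_coef_eq0.
  exists (lead_coef g * w); split.
  + exact: (subr_M hS).
  + exact: dom_mul.
  move=> phi hphi; rewrite (homS_M hphi) // => pu.
  have pc : phi (lead_coef g) != 0 by apply: contraNneq pu => ->; rewrite mul0r.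
  have pw : phi w != 0 by apply: contraNneq pu => ->; rewrite mulr0.
  have [a Ja] := int_step hS hphi gS gx pc.
  exists (psi_of S x phi a); split; first exact: psi_hom.
  have pe := psi_ext hS hphi Ja wS.
  move: pe; rewrite {1}wE (homS_M (psi_hom hS hphi Ja)); last 2 first.
  + by exists pv.
  + exact: HT.
  move=> pe; apply: contraNneq pw => pv0.
  by rewrite -pe pv0 mul0r.
- have pv0 : pv != 0 by apply: contraNneq v0 => ->; rewrite horner0.
  exists (lead_coef pv); split.
  + by apply: pvS.
  + by rewrite lead_coef_eq0.
  move=> phi hphi pu.
  set h := map_poly phi pv.
  have hlc : h`_(size pv).-1 = phi (lead_coef pv) by rewrite (coef_mapS hphi).
  have h0 : h != 0 by apply: contraNneq pu => h0; rewrite -hlc h0 coef0.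
  have szh : size (h * 'X - 1) != 1%N.
    rewrite size_polyDl ?size_mulX // ?size_polyN ?size_poly1 ?ltnS ?lt0n ?size_poly_eq0 // eqSS size_poly_eq0 //.
  case/closed_rootP: szh => a /rootP.
  rewrite hornerD hornerN hornerMX hornerC => ha.
  have Ja : forall p, polyS S p -> p.[x] = 0 -> (map_poly phi p).[a] = 0.
    move=> p pS px; case: (eqVneq p 0) => [->|p0]; first by rewrite map_poly0 horner0.
    by exfalso; apply: nog; exists p.
  exists (psi_of S x phi a); split; first exact: psi_hom.
  rewrite (psi_eval hS hphi Ja pvS).
  apply/eqP => hz; move: ha; rewrite -/h hz mul0r sub0r => /eqP.
  by rewrite oppr_eq0 oner_eq0.
Qed.

Fixpoint adjl (S : A -> Prop) (l : seq A) : A -> Prop :=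
  if l is x :: l' then adjl (adj S x) l' else S.

Lemma subr_adjl l S : subr S -> subr (adjl S l).
Proof. by elim: l S => //= x l IH S hS; apply: IH; exact: subr_adj. Qed.
Lemma adjl_mono l S a : subr S -> S a -> adjl S l a.
Proof. by elim: l S => //= x l IH S hS Sa; apply: IH; [exact: subr_adj | exact: adj_S]. Qed.
Lemma adjl_mem l S a : subr S -> a \in l -> adjl S l a.
Proof.
elim: l S => //= x l IH S hS; rewrite in_cons => /orP [/eqP -> | al].
  by apply: adjl_mono; [exact: subr_adj | exact: adj_x].
by apply: IH => //; exact: subr_adj.
Qed.

Lemma claim l : forall S, subr S -> forall v, adjl S l v -> v != 0 ->
  exists u, [/\ S u, u != 0 & forall phi, homS S phi -> phi u != 0 ->
     exists psi, homS (adjl S l) psi /\ psi v != 0].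
Proof.
elim: l => [|x l IH] S hS v /= Tv v0.
  by exists v; split => // phi hphi pv; exists phi.
have [u' [u'S u'0 Hu']] := IH _ (@subr_adj S x hS) v Tv v0.
have [u [uS u0 Hu]] := one_step hS u'S u'0.
exists u; split => // phi hphi pu.
have [psi' [hpsi' pu']] := Hu phi hphi pu.
exact: Hu' psi' hpsi' pu'.
Qed.
End OneStep.

Lemma nullst (hA : @affine_coord_ring k A) v : v != 0 ->
  exists psi, homS (fun _ : A => True) psi /\ psi v != 0.
Proof.
case: hA => [[s gen] dom] v0.
have hk : subr (@in_k k A).
  split.
  - by move=> c; exists c.
  - by move=> _ _ [c ->] [c' ->]; exists (c + c'); rewrite scalerDl.
  - by move=> _ _ [c ->] [c' ->]; exists (c * c'); rewrite -scalerAl mul1r scalerA.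
have all : forall a, adjl (@in_k k A) s a.
  apply: gen.
  - by move=> c; apply: adjl_mono => //; exists c.
  - by move=> a ha; apply: adjl_mem.
  - exact: (subr_D (subr_adjl s hk)).
  - exact: (subr_M (subr_adjl s hk)).
have [u [[c uc] u0 Hu]] := claim dom hk (all v) v0.
pose phi0 (a : A) := epsilon (inhabits 0) (fun c => a = c%:A).
have inj : forall c1 c2 : k, c1%:A = c2%:A :> A -> c1 = c2.
  move=> c1 c2 e; apply/eqP; rewrite -subr_eq0.
  have : (c1 - c2) *: (1:A) == 0 by rewrite scalerBl e subrr.
  by rewrite scaler_eq0 (negbTE (proj1 dom)) orbF.
have phi0E : forall c1, phi0 c1%:A = c1.
  move=> c1; rewrite /phi0.
  have := epsilon_spec (inhabits 0) (fun c => c1%:A = c%:A :> A) (ex_intro _ c1 erefl).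
  by move/inj.
have hphi0 : homS (@in_k k A) phi0.
  split => //.
  - by move=> _ _ [c1 ->] [c2 ->]; rewrite -scalerDl !phi0E.
  - by move=> _ _ [c1 ->] [c2 ->]; rewrite -scalerAl mul1r scalerA !phi0E.
have pu : phi0 u != 0.
  by rewrite uc phi0E; apply/eqP => c0; move: u0; rewrite uc c0 scale0r eqxx.
have [psi [hpsi pv]] := Hu phi0 hphi0 pu.
exists psi; split => //; split.
- exact: (homS_k hpsi).
- by move=> a b _ _; apply: (homS_D hpsi).
- by move=> a b _ _; apply: (homS_M hpsi).
Qed.
End Null.

Record lndpt (k : fieldType) (A : comAlgType k) := LndPt {
  ep_D : {linear A -> A};
  ep_psi : A -> k;
  ep_LND : is_LND ep_D;
  ep_hom : homS (fun _ : A => True) ep_psi;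
  ep_char : [pchar k] =i pred0 }.

Section Exp.
Variables (k : fieldType) (A : comAlgType k) (P : lndpt A).
Let D := ep_D P.
Let psi := ep_psi P.
Let hpsi : homS (fun _ : A => True) psi := ep_hom P.
Let hT : subr (fun _ : A => True). Proof. by split. Qed.

Lemma iterD0 n : iter n D 0 = 0.
Proof. by elim: n => //= n ->; rewrite linear0. Qed.
Lemma iterDD n a b : iter n D (a + b) = iter n D a + iter n D b.
Proof. by elim: n => //= n ->; rewrite linearD. Qed.
Lemma iterDZ n c a : iter n D (c *: a) = c *: iter n D a.
Proof. by elim: n => //= n ->; rewrite linearZ. Qed.
Lemma iterDMn n a m : iter n D (a *+ m) = iter n D a *+ m.
Proof. by elim: n => //= n ->; rewrite linearMn. Qed.
Lemma iterD_sum n (I : Type) (r : seq I) (F : I -> A) :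
  iter n D (\sum_(i <- r) F i) = \sum_(i <- r) iter n D (F i).
Proof.
elim: r => [|x r IH]; first by rewrite !big_nil iterD0.
by rewrite !big_cons iterDD IH.
Qed.

Definition nilidx (a : A) : nat := epsilon (inhabits 0%N) (fun m => iter m D a = 0).

Lemma nilidxP a : iter (nilidx a) D a = 0.
Proof.
rewrite /nilidx; apply: (epsilon_spec (inhabits 0%N) (fun m => iter m D a = 0)).
exact: (proj2 (ep_LND P) a).
Qed.

Lemma iter_big a i : (nilidx a <= i)%N -> iter i D a = 0.
Proof.
move=> hi; rewrite -(subnK hi) iterD; by rewrite nilidxP iterD0.
Qed.

Let hD : is_derivation D := proj1 (ep_LND P).

Lemma leibniz n a b : iter n D (a * b) =
  \sum_(j < n.+1) (iter j D a * iter (n - j) D b) *+ 'C(n, j).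
Proof.
elim: n => [|n IH]; first by rewrite big_ord1 /= mulr1n.
have E1 : iter n.+1 D (a * b) =
   \sum_(j < n.+1) (iter j D a * iter (n.+1 - j) D b) *+ 'C(n, j) +
   \sum_(j < n.+1) (iter j.+1 D a * iter (n - j) D b) *+ 'C(n, j).
  rewrite iterS IH linear_sum -big_split /=; apply: eq_bigr => j _.
  rewrite linearMn hD -mulrnDl; congr (_ *+ _).
  by rewrite subSn // -ltnS.
rewrite E1 (big_ord_recl n) [RHS]big_ord_recl -addrA; congr (_ + _).
  by rewrite !bin0.
under [in RHS]eq_bigr => j _ do rewrite lift0 subSS binS mulrnDr.
rewrite big_split /=; congr (_ + _).
rewrite [RHS](big_ord_recr n) /= bin_small // mulr0n addr0.
apply: eq_bigr => j _; rewrite /bump /= add1n subSS add0n.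
by [].
Qed.

Definition gexp (a : A) : {poly k} := \poly_(i < nilidx a) (psi (iter i D a) / (i`!)%:R).

Lemma coef_gexp a i : (gexp a)`_i = psi (iter i D a) / (i`!)%:R.
Proof.
rewrite coef_poly; case: ltnP => // hi.
by rewrite iter_big // (hom0 hpsi) mul0r.
Qed.

Lemma gexp_nmod : nmod_morphism gexp.
Proof.
split.
  by apply/polyP => i; rewrite coef_gexp coef0 iterD0 (hom0 hpsi) mul0r.
move=> a b; apply/polyP => i.
by rewrite coefD !coef_gexp iterDD (homS_D hpsi) // mulrDl.
Qed.

Lemma D1 : D 1 = 0.
Proof.
have h := hD 1 1; rewrite !mulr1 !mul1r in h.
by apply: (@addrI _ (D 1)); rewrite addr0 -h.
Qed.

Lemma gexp_mul : monoid_morphism gexp.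
Proof.
have hc := ep_char P.
have nz : forall m, (m%:R : k) != 0 -> True by [].
have nat0 : forall m, (0 < m)%N -> (m%:R : k) != 0.
  by move=> m hm; rewrite (proj1 (pcharf0P k) hc m) -lt0n.
split.
  apply/polyP => i; rewrite coef_gexp coef1; case: i => [|i].
    by rewrite /= (hom1 hpsi) fact0 divr1.
  by rewrite iterSr D1 iterD0 (hom0 hpsi) mul0r.
move=> a b; apply/polyP => n; rewrite coef_gexp coefM leibniz.
rewrite (homsum hT hpsi) // mulr_suml; apply: eq_bigr => j _.
rewrite !coef_gexp -mulr_natr (homS_M hpsi) // (homnat hpsi) (homS_M hpsi) //.
have jn : (j <= n)%N by rewrite -ltnS.
have hbf := bin_fact jn.
rewrite -{1}hbf !natrM.
have h1 : ('C(n, j)%:R : k) != 0 by apply: nat0; rewrite bin_gt0.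
have h2 := nat0 _ (fact_gt0 j).
have h3 := nat0 _ (fact_gt0 (n - j)).
field.
by rewrite h1 h2 h3.
Qed.

Lemma gexp_scale : scalable_for *:%R gexp.
Proof.
move=> c a; apply/polyP => i.
by rewrite coefZ !coef_gexp iterDZ (homZ hT hpsi) // mulrA.
Qed.

Lemma gexp_coef1 a : (gexp a)`_1 = psi (D a).
Proof. by rewrite coef_gexp /= divr1. Qed.
End Exp.

HB.instance Definition _ (k : fieldType) (A : comAlgType k) (P : lndpt A) :=
  GRing.isNmodMorphism.Build A {poly k} (gexp P) (gexp_nmod P).
HB.instance Definition _ (k : fieldType) (A : comAlgType k) (P : lndpt A) :=
  GRing.isMonoidMorphism.Build A {poly k} (gexp P) (gexp_mul P).
HB.instance Definition _ (k : fieldType) (A : comAlgType k) (P : lndpt A) :=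
  GRing.isScalable.Build k A {poly k} *:%R (gexp P) (gexp_scale P).


Unset Implicit Arguments. Set Strict Implicit. Set Printing Implicit Defensive.

Theorem proposition6p10 (k : closedFieldType) (hchar : [pchar k] =i pred0)
  (A : comAlgType k) (hA : affine_coord_ring A) :
  (forall f : A, Och f -> ML f) /\
  ((forall f : A, ML f <-> in_k f) -> forall f : A, Och f <-> in_k f).
Proof.
have part1 : forall f : A, Och f -> ML f.
  move=> f Hf D hD.
  case: (eqVneq (D f) 0) => // Df0.
  have [psi [hpsi pD]] := nullst hA Df0.
  pose P := @LndPt k A D psi hD hpsi hchar.
  have sz := Hf (gexp P); rewrite /Och_g in sz.
  have : (gexp P f)`_1 = 0 by rewrite nth_default.
  by rewrite gexp_coef1 /= => pz; rewrite pz eqxx in pD.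
split => // H f; split.
  by move=> /part1 /H.
move=> [c ->] g; rewrite /Och_g linearZ rmorph1 /=.
by apply: leq_trans (size_scale_leq _ _) _; rewrite size_poly1.
Qed.
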